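(* Let $c:\mathbb{Q}\times\mathbb{Q}\to\mathbb{Q}$ (the controller) be any function such that for all $x,y\in\mathbb{Q}$ with $|x|\le 3.25$ and $|y|\le 3.25$ we have $|c(x,y)+2x-y|<1.25$. Consider the discrete-time system whose states are quadruples $(w,p,v,s)\in\mathbb{Q}^4$ (wind speed, position on the $y$-axis, velocity in the $y$-direction, most recent sensor reading), starting from the initial state $(w_0,p_0,v_0,s_0)=(0,0,0,0)$. An observation is a pair $(\delta,\varepsilon)\in\mathbb{Q}^2$ (wind shift, sensor error), and an observation $(\delta,\varepsilon)$ transforms a state $(w,p,v,s)$ into $(w',p',v',s')$ where $w'=w+\delta$, $p'=p+v+w'$, $s'=p'+\varepsilon$, $v'=v+c(s',s)$. Then for every finite sequence of observations $(\delta_1,\varepsilon_1),\dots,(\delta_k,\varepsilon_k)$ ($k\ge 0$) satisfying $|\delta_i|\le 1$ and $|\varepsilon_i|\le 0.25$ for all $i$, the state reached after applying these observations in turn has position $p$ with $|p|\le 3$; i.e. the car never leaves the road.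
   Context: The model describes a car travelling along a straight road of width 6 parallel to the $x$-axis (so being on the road means the $y$-position satisfies $|p|\le 3$), subject to a cross-wind perpendicular to the road, with a noisy position sensor; at each step the controller receives the current and previous sensor readings and outputs a change in the car's $y$-velocity. Informally: if the wind speed never shifts by more than 1 per unit time and the sensor is never off by more than 0.25, then the car never leaves the road. *)

(* Defs.v *)
From mathcomp Require Import all_boot all_order all_algebra.
Set Implicit Arguments. Unset Strict Implicit. Unset Printing Implicit Defensive.
Import Order.TTheory GRing.Theory Num.Theory.
Local Open Scope ring_scope.

Record state := State { st_w : rat; st_p : rat; st_v : rat; st_s : rat }.

Definition init_state : state := State 0 0 0 0.

Definition step (c : rat -> rat -> rat) (st : state) (o : rat * rat) : state :=
  let w' := st_w st + o.1 in
  let p' := st_p st + st_v st + w' in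
  let s' := p' + o.2 in
  let v' := st_v st + c s' (st_s st) in
  State w' p' v' s'.

Definition run (c : rat -> rat -> rat) (obs : seq (rat * rat)) : state :=
  foldl (step c) init_state obs.

(* Main.v *)
Require Import Defs.
From mathcomp Require Import all_boot all_order all_algebra.
From mathcomp Require Import lra.
Import Order.TTheory GRing.Theory Num.Theory.
Local Open Scope ring_scope.

Definition Inv (st : state) : Prop :=
  `|st_p st| <= 3%:R /\ `|st_s st - st_p st| <= 1 / 4%:R /\
  `|st_w st + st_v st + 2%:R * st_s st - st_p st| < 3%:R / 2%:R.

Lemma step_inv (c : rat -> rat -> rat)
  (hc : forall x y : rat, `|x| <= 13%:R / 4%:R -> `|y| <= 13%:R / 4%:R ->
          `|c x y + 2%:R * x - y| < 5%:R / 4%:R)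
  st (o : rat * rat) : `|o.1| <= 1 -> `|o.2| <= 1 / 4%:R -> Inv st -> Inv (step c st o).
Proof.
case: st => w p v s; case: o => d e /=.
rewrite /Inv /step /=.
move=> /ler_normlP [d1 d2] /ler_normlP [e1 e2] [/ler_normlP [p1 p2] [/ler_normlP [q1 q2] /ltr_normlP [r1 r2]]].
have hp : `|p + v + (w + d)| <= 3%:R.
  by apply/ler_normlP; split; lra.
move: hp => /ler_normlP [h1 h2].
have hs1 : `|p + v + (w + d) + e| <= 13%:R / 4%:R by apply/ler_normlP; split; lra.
have hs2 : `|s| <= 13%:R / 4%:R by apply/ler_normlP; split; lra.
have /ltr_normlP [k1 k2] := hc _ _ hs1 hs2.
split; first by apply/ler_normlP; split; lra.
split; first by apply/ler_normlP; split; lra.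
by apply/ltr_normlP; split; lra.
Qed.

Theorem theorem1 (c : rat -> rat -> rat)
  (hc : forall x y : rat, `|x| <= 13%:R / 4%:R -> `|y| <= 13%:R / 4%:R ->
          `|c x y + 2%:R * x - y| < 5%:R / 4%:R)
  (obs : seq (rat * rat))
  (hobs : forall o, o \in obs -> `|o.1| <= 1 /\ `|o.2| <= 1 / 4%:R) :
  `|st_p (run c obs)| <= 3%:R.
Proof.
suff : Inv (run c obs) by case.
rewrite /run.
have : Inv init_state.
  by rewrite /Inv /= !(subrr, mulr0, addr0, normr0); split; [|split]; lra.
elim: obs hobs init_state => [|o obs IH] hobs st //= Hst.
apply: IH.
  by move=> o' Ho'; apply: hobs; rewrite in_cons Ho' orbT.
have [h1 h2] := hobs o (mem_head _ _).
exact: step_inv.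
Qed.
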